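(* Let $G$ be a connected graph and let $e,f$ be edges of $G$ with $e\,\Theta_G\,f$. Then there exist an endpoint $x$ of $e$ and an endpoint $u$ of $f$ such that $e_{\bar{x}}\,\Theta_{S(G)}\,f_{\bar{u}}$. Moreover, if $G$ is bipartite, then there are two disjoint such pairs $\{e_{\bar{x}},f_{\bar{u}}\}$ of edges of $S(G)$ in relation $\Theta_{S(G)}$.
   Context: For a connected graph $H$ with shortest-path distance $d_H$, two edges $\{x,y\}$ and $\{u,v\}$ of $H$ are in relation $\Theta_H$ if $d_H(x,u)+d_H(y,v)\neq d_H(x,v)+d_H(y,u)$. The full subdivision $S(G)$ is obtained by subdividing every edge of $G$ exactly once; the vertex of $S(G)$ corresponding to a vertex $x$ of $G$ is denoted $\bar{x}$, and the vertex subdividing the edge $\{x,y\}$ is denoted $\overline{xy}$. For $e=\{x,y\}\in E(G)$, $e_{\bar{x}}=\{\bar{x},\overline{xy}\}$ and $e_{\bar{y}}=\{\bar{y},\overline{xy}\}$ are the two edges of $S(G)$ corresponding to $e$. *)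

(* Defs.v *)
From mathcomp Require Import all_boot.
Set Implicit Arguments. Unset Strict Implicit. Unset Printing Implicit Defensive.

Section Graphs.
Variable T : finType.
Variable g : rel T.

Definition walkn (n : nat) (x y : T) : bool :=
  [exists p : n.-tuple T, path g x p && (last x p == y)].

(* shortest-path distance: least n admitting a walk of length n
   (a shortest walk, if any, has length < #|T|) *)
Definition dist (x y : T) : nat := find (fun n => walkn n x y) (iota 0 #|T|).

Definition connected_graph : Prop := forall x y : T, connect g x y.
Definition simple_graph : Prop := symmetric g /\ irreflexive g.
Definition bipartite : Prop := exists c : T -> bool, forall x y, g x y -> c x != c y.

(* Theta relation on (oriented representatives of) edges {x,y}, {u,v} *)
Definition Theta (xy uv : T * T) : Prop :=
  dist xy.1 uv.1 + dist xy.2 uv.2 <> dist xy.1 uv.2 + dist xy.2 uv.1.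

Definition gedge : pred {set T} :=
  fun A => [exists x, exists y, g x y && (A == [set x; y])].
Definition edgeT := {A : {set T} | gedge A}.

(* full subdivision S(G): vertices inl x = \bar x, inr E = \bar{xy} *)
Definition SV := (T + edgeT)%type.
Definition Srel : rel SV := fun a b =>
  match a, b with
  | inl x, inr E => x \in val E
  | inr E, inl x => x \in val E
  | _, _ => false
  end.
End Graphs.

(* Main.v *)
Require Import Defs.
From mathcomp Require Import all_boot.
From mathcomp Require Import zify.
Set Implicit Arguments. Unset Strict Implicit. Unset Printing Implicit Defensive.

Section Gen.
Variable T : finType.
Variable g : rel T.

Lemma walkn0 p w : walkn g 0 p w = (p == w).
Proof.
apply/existsP/idP => [[t /andP[_ /eqP <-]]|/eqP <-].
  by rewrite (tuple0 t).
by exists [tuple]; rewrite /= eqxx.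
Qed.

Lemma walknS k p w : walkn g k.+1 p w = [exists n, g p n && walkn g k n w].
Proof.
apply/existsP/existsP => [[t]|[n /andP[gpn /existsP[t /andP[pt lt]]]]].
  case/tupleP: t => n t /= /andP[/andP[gpn pt] lt].
  by exists n; rewrite gpn; apply/existsP; exists t; rewrite pt.
by exists [tuple of n :: t]; rewrite /= gpn pt.
Qed.

Lemma walknT k p w : walkn g k.+1 p w = [exists n, walkn g k p n && g n w].
Proof.
elim: k p => [|k IH] p.
  rewrite walknS; apply/existsP/existsP => [[n]|[n]]; rewrite walkn0.
    by case/andP=> h /eqP <-; exists p; rewrite walkn0 eqxx.
  by case/andP=> /eqP <- h; exists w; rewrite walkn0 eqxx h.
rewrite walknS; apply/existsP/existsP.
  move=> [n1 /andP[gpn1 h]]; rewrite IH in h; case/existsP: h => n /andP[h1 h2].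
  by exists n; rewrite h2 walknS andbT; apply/existsP; exists n1; rewrite gpn1 h1.
move=> [n /andP[h gnw]]; rewrite walknS in h; case/existsP: h => n1 /andP[gpn1 h1].
by exists n1; rewrite gpn1 IH; apply/existsP; exists n; rewrite h1 gnw.
Qed.

Definition reach p w := exists k, walkn g k p w.

Lemma find_le_size p w : dist g p w <= #|T|.
Proof. by rewrite /dist -{2}(size_iota 0 #|T|) find_size. Qed.

Lemma dist_le k p w : walkn g k p w -> dist g p w <= k.
Proof.
move=> h; rewrite leqNgt; apply/negP => hlt.
have hs := find_le_size p w.
have := before_find 0 hlt; rewrite nth_iota ?add0n ?h //.
exact: leq_trans hlt hs.
Qed.

Lemma short_walk k p w : walkn g k p w -> exists2 j, j < #|T| & walkn g j p w.
Proof.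
case/existsP=> t /andP[pt /eqP lt].
case: (shortenP pt) lt => s ps us _ ls.
exists (size s).
  move/card_uniqP: us => /= hc.
  by have := max_card [pred z in p :: s]; rewrite -ltnS -hc.
apply/existsP; exists (in_tuple s); by rewrite /= ps ls eqxx.
Qed.

Lemma dist_walk p w : reach p w -> walkn g (dist g p w) p w /\ dist g p w < #|T|.
Proof.
case=> k /short_walk [j hj hw].
have hh : has (fun n => walkn g n p w) (iota 0 #|T|).
  by apply/hasP; exists j => //; rewrite mem_iota.
have := nth_find 0 hh; move: hh; rewrite has_find size_iota => hh.
by rewrite nth_iota ?add0n.
Qed.

Lemma dist_self p : dist g p p = 0.
Proof. by apply/eqP; rewrite -leqn0; apply: (@dist_le 0); rewrite walkn0. Qed.

Lemma dist_pos p w : reach p w -> p != w -> 0 < dist g p w.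
Proof.
move=> /dist_walk [h _] ne; rewrite lt0n; apply/negP => /eqP h0.
by rewrite h0 walkn0 (negbTE ne) in h.
Qed.

Lemma dist_step p n w : g p n -> reach n w -> dist g p w <= (dist g n w).+1.
Proof.
move=> gpn /dist_walk [h _]; apply: dist_le; rewrite walknS.
by apply/existsP; exists n; rewrite gpn h.
Qed.

Lemma dist_dec p w : reach p w -> p != w ->
  exists2 n, g p n & dist g p w = (dist g n w).+1.
Proof.
move=> r ne; have [h _] := dist_walk r.
move: h; case e: (dist g p w) => [|k].
  by rewrite walkn0 (negbTE ne).
rewrite walknS => /existsP [n /andP[gpn h]].
exists n => //; apply/eqP; rewrite eqn_leq -e dist_step //; last by exists k.
by rewrite e ltnS dist_le.
Qed.

Hypothesis gsym : symmetric g.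

Lemma walkn_sym k p w : walkn g k p w = walkn g k w p.
Proof.
elim: k p w => [|k IH] p w; first by rewrite !walkn0 eq_sym.
rewrite walknS walknT; apply: eq_existsb => n; by rewrite IH gsym andbC.
Qed.

Lemma dist_sym p w : dist g p w = dist g w p.
Proof. by rewrite /dist; apply: eq_find => k; exact: walkn_sym. Qed.

Lemma connect_reach p w : connect g p w -> reach p w.
Proof.
case/connectP => s ps ->; exists (size s); apply/existsP; exists (in_tuple s).
by rewrite /= ps eqxx.
Qed.

Lemma parity (c : T -> bool) : (forall x y, g x y -> c x != c y) ->
  forall k a b, walkn g k a b -> c b = c a (+) odd k.
Proof.
move=> hc; elim=> [|k IH] a b; first by rewrite walkn0 => /eqP ->; rewrite addbF.
rewrite walknS => /existsP [n /andP[gan /IH ->]].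
move: (hc _ _ gan) => /=; by case: (c a); case: (c n); case: (odd k).
Qed.

End Gen.

Section S.
Variable T : finType.
Variable g : rel T.
Hypothesis gsym : symmetric g.
Hypothesis gcon : connected_graph g.

Local Notation S := (Srel (g:=g)).
Local Notation DS := (dist S).
Local Notation D := (dist g).

Lemma Srel_sym : symmetric S.
Proof. by move=> [a|E] [b|F]. Qed.

Lemma gedgeP a n : g a n -> gedge g [set a; n].
Proof. move=> h; apply/existsP; exists a; apply/existsP; exists n; by rewrite h eqxx. Qed.

Definition mkE a n (h : g a n) : edgeT g := exist _ [set a; n] (gedgeP h).

Lemma reachG p w : reach g p w.
Proof. exact: connect_reach. Qed.

Lemma double_walk k a b : walkn g k a b -> walkn S k.*2 (inl a) (inl b).
Proof.
elim: k a => [|k IH] a; first by rewrite !walkn0 => /eqP ->.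
rewrite walknS => /existsP [n /andP[gan h]].
rewrite doubleS walknS; apply/existsP; exists (inr (mkE gan)).
rewrite /= set21 walknS; apply/existsP; exists (inl n); by rewrite /= set22 IH.
Qed.

Lemma edge_mem (E : edgeT g) : exists x, x \in val E.
Proof.
case: E => A /= /existsP [x /existsP [y /andP[_ /eqP ->]]].
by exists x; rewrite set21.
Qed.

Lemma reachS_l a q : reach S (inl a) q.
Proof.
have rl b : reach S (inl a) (inl b).
  by case: (reachG a b) => k /double_walk h; exists k.*2.
case: q => [b|F] //.
have [y hy] := edge_mem F; case: (rl y) => k h; exists k.+1.
by rewrite walknT; apply/existsP; exists (inl y); rewrite h.
Qed.

Lemma reachS p q : reach S p q.
Proof.
case: p => [a|E]; first exact: reachS_l.
have [x hx] := edge_mem E; case: (reachS_l x q) => k h; exists k.+1.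
by rewrite walknS; apply/existsP; exists (inl x); rewrite /= hx.
Qed.

Lemma edge_adj (E : edgeT g) a c : a \in val E -> c \in val E -> a != c -> g a c.
Proof.
case: E => A /= /existsP [x /existsP [y /andP[gxy /eqP ->]]].
rewrite !in_set2 => /orP[]/eqP-> /orP[]/eqP-> //; rewrite ?eqxx //.
by rewrite gsym.
Qed.

Lemma S_ll_le a b : DS (inl a) (inl b) <= (D a b).*2.
Proof.
move Hn: (D a b) => n; elim: n a Hn => [|n IH] a Hn.
  have [h _] := dist_walk (reachG a b); move: h; rewrite Hn walkn0 => /eqP ->.
  by rewrite dist_self.
have ne : a != b by apply/eqP => e; rewrite e dist_self in Hn.
have [n1 gan1 e] := dist_dec (reachG a b) ne.
have h0 : DS (inl n1) (inl b) <= n.*2 := IH n1 ltac:(by move: e; rewrite Hn => -[]).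
have s1 : S (inl a) (inr (mkE gan1)) by rewrite /= set21.
have s2 : S (inr (mkE gan1)) (inl n1) by rewrite /= set22.
have h1 : DS (inl a) (inl b) <= (DS (inr (mkE gan1)) (inl b)).+1 := dist_step s1 (reachS _ _).
have h2 : DS (inr (mkE gan1)) (inl b) <= (DS (inl n1) (inl b)).+1 := dist_step s2 (reachS _ _).
rewrite doubleS; lia.
Qed.

Lemma S_ll_ge a b : (D a b).*2 <= DS (inl a) (inl b).
Proof.
move Hn: (DS (inl a) (inl b)) => n; elim/ltn_ind: n a Hn => n IH a Hn.
have [->|ne] := eqVneq a b; first by rewrite dist_self.
have [q hq e1] := dist_dec (reachS (inl a) (inl b)) ltac:(by []).
case: q hq e1 => [//|E'] /= haE e1.
have [q2 hq2 e2] := dist_dec (reachS (inr E') (inl b)) ltac:(by []).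
case: q2 hq2 e2 => [c|//] /= hcE e2.
have {}e1 : DS (inl a) (inl b) = (DS (inr E') (inl b)).+1 := e1.
have {}e2 : DS (inr E') (inl b) = (DS (inl c) (inl b)).+1 := e2.
have h0 : (D c b).*2 <= DS (inl c) (inl b) := IH (DS (inl c) (inl b)) ltac:(lia) c erefl.
have : D a b <= (D c b).+1.
  have [->|nac] := eqVneq a c; first lia.
  exact: dist_step (edge_adj haE hcE nac) (reachG _ _).
lia.
Qed.

Lemma S_ll a b : DS (inl a) (inl b) = (D a b).*2.
Proof. by apply/eqP; rewrite eqn_leq S_ll_le S_ll_ge. Qed.

Lemma S_edge (F : edgeT g) u v q : q != inr F -> val F = [set u; v] ->
  DS (inr F) q = (minn (DS (inl u) q) (DS (inl v) q)).+1.
Proof.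
move=> ne hF.
have s1 : S (inr F) (inl u) by rewrite /= hF set21.
have s2 : S (inr F) (inl v) by rewrite /= hF set22.
have h1 : DS (inr F) q <= (DS (inl u) q).+1 := dist_step s1 (reachS _ _).
have h2 : DS (inr F) q <= (DS (inl v) q).+1 := dist_step s2 (reachS _ _).
have [q0 hq0 e] := dist_dec (reachS (inr F) q) ltac:(by rewrite eq_sym).
case: q0 hq0 e => [c|//] /=; rewrite hF in_set2 => /orP[]/eqP -> e.
  set du := DS (inl u) q in e h1 h2 *; set dv := DS (inl v) q in e h1 h2 *; lia.
set du := DS (inl u) q in e h1 h2 *; set dv := DS (inl v) q in e h1 h2 *; lia.
Qed.

End S.

Unset Implicit Arguments.

Lemma arith4 (A B C D K Rx Ry Cu Cv : nat) : A + D <> B + C ->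
  A.*2 + K <> Rx + Cu \/ B.*2 + K <> Rx + Cv \/ C.*2 + K <> Ry + Cu \/ D.*2 + K <> Ry + Cv.
Proof. lia. Qed.

Theorem lemma3p3 (T : finType) (g : rel T) :
  simple_graph g -> connected_graph g ->
  forall (x y u v : T) (E F : edgeT g),
    g x y -> g u v -> val E = [set x; y] -> val F = [set u; v] ->
    Theta g (x, y) (u, v) ->
    (exists a b : T, [/\ a \in val E, b \in val F &
        Theta (Srel (g:=g)) (inl a, inr E) (inl b, inr F)])
    /\
    (bipartite g ->
      exists a b a' b' : T,
        [/\ a \in val E, b \in val F, a' \in val E & b' \in val F] /\
        [/\ Theta (Srel (g:=g)) (inl a, inr E) (inl b, inr F),
            Theta (Srel (g:=g)) (inl a', inr E) (inl b', inr F) &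
            [set (a, E); (b, F)] :&: [set (a', E); (b', F)] = set0]).
Proof.
move=> [gsym girr] gcon x y u v E F gxy guv hE hF hTh.
have rG := reachG gcon.
have rS := reachS gcon.
have nxy : x != y by apply/eqP => e; rewrite e girr in gxy.
have nuv : u != v by apply/eqP => e; rewrite e girr in guv.
have [EF|nEF] := eqVneq E F.
  subst F.
  have hxE : x \in val E by rewrite hE set21.
  have hyE : y \in val E by rewrite hE set22.
  have th a : Theta (Srel (g:=g)) (inl a, inr E) (inl a, inr E).
    rewrite /Theta /= !dist_self => /esym/eqP; rewrite addn_eq0 => /andP[/eqP h _].
    by move: (dist_pos (rS (inl a) (inr E)) isT); rewrite h.
  split; first by exists x, x.
  move=> _; exists x, x, y, y; split; first by [].
  split; try exact: th.
  apply/setP => z; rewrite !inE; apply/negbTE; apply/negP.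
  move=> /andP[/orP[]/eqP-> /orP[]/eqP[]]; by move=> e; rewrite e eqxx in nxy.
have e1 a b : dist (Srel (g:=g)) (inl a) (inl b) = (dist g a b).*2 by exact: S_ll gsym gcon a b.
have e2 b : dist (Srel (g:=g)) (inr E) (inl b) =
    (minn (dist g x b).*2 (dist g y b).*2).+1.
  by rewrite (S_edge gcon _ hE) // !e1.
have Ssym := Srel_sym (g:=g).
have e3 a : dist (Srel (g:=g)) (inl a) (inr F) =
    (minn (dist g a u).*2 (dist g a v).*2).+1.
  by rewrite (dist_sym Ssym) (S_edge gcon _ hF) // !e1 (dist_sym gsym u) (dist_sym gsym v).
have neFE : inr F != inr E :> SV g by apply/eqP => -[e]; rewrite e eqxx in nEF.
have e4 : dist (Srel (g:=g)) (inr E) (inr F) =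
   (minn (minn (dist g x u).*2 (dist g x v).*2).+1 (minn (dist g y u).*2 (dist g y v).*2).+1).+1.
  by rewrite (S_edge gcon neFE hE) !e3.
have thE a b : Theta (Srel (g:=g)) (inl a, inr E) (inl b, inr F) <->
   ((dist g a b).*2 + (minn (minn (dist g x u).*2 (dist g x v).*2).+1 (minn (dist g y u).*2 (dist g y v).*2).+1).+1
     <> (minn (dist g a u).*2 (dist g a v).*2).+1 + (minn (dist g x b).*2 (dist g y b).*2).+1).
  by rewrite /Theta /= e4 e1 e2 e3.
clear e4.
have mem1 : x \in val E by rewrite hE set21.
have mem2 : y \in val E by rewrite hE set22.
have mem3 : u \in val F by rewrite hF set21.
have mem4 : v \in val F by rewrite hF set22.
move: hTh; rewrite /Theta /= => hTh.
split.
  pose K := (minn (minn (dist g x u).*2 (dist g x v).*2).+1 (minn (dist g y u).*2 (dist g y v).*2).+1).+1.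
  case: (@arith4 _ _ _ _ K (minn (dist g x u).*2 (dist g x v).*2).+1 (minn (dist g y u).*2 (dist g y v).*2).+1
     (minn (dist g x u).*2 (dist g y u).*2).+1 (minn (dist g x v).*2 (dist g y v).*2).+1 hTh)
     => [h|[h|[h|h]]]; [exists x, u | exists x, v | exists y, u | exists y, v];
     (split; [by [] | by [] | by apply/thE; exact: h]).
move=> [c hc].
have par a b : c b = c a (+) odd (dist g a b) := parity hc (dist_walk (rG a b)).1.
have nq a : dist g a u != dist g a v.
  by apply/eqP => e; move: (hc u v guv); rewrite (par a u) (par a v) e eqxx.
have nq' b : dist g x b != dist g y b.
  apply/eqP => e; move: (hc x y gxy).
  by rewrite (par b x) (par b y) (dist_sym gsym b x) (dist_sym gsym b y) e eqxx.
have gvu : g v u by rewrite gsym.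
have gyx : g y x by rewrite gsym.
have adj1 a : dist g a u <= (dist g a v).+1 /\ dist g a v <= (dist g a u).+1.
  rewrite !(dist_sym gsym a); split; [exact: dist_step guv (rG _ _) | exact: dist_step gvu (rG _ _)].
have adj2 b : dist g x b <= (dist g y b).+1 /\ dist g y b <= (dist g x b).+1.
  split; [exact: dist_step gxy (rG _ _) | exact: dist_step gyx (rG _ _)].
have := nq x; have := nq y; have := nq' u; have := nq' v.
move: (adj1 x) (adj1 y) (adj2 u) (adj2 v) => [a1 a2] [a3 a4] [a5 a6] [a7 a8].
move=> /eqP n1 /eqP n2 /eqP n3 /eqP n4.
have [lt|ge] := ltnP (dist g x u) (dist g x v).
  have [ea [eb ec]] : dist g x v = (dist g x u).+1 /\ dist g y u = (dist g x u).+1 /\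
     dist g y v = dist g x u
    by clear -a1 a2 a3 a4 a5 a6 a7 a8 n1 n2 n3 n4 hTh lt; lia.
  clear a1 a2 a3 a4 a5 a6 a7 a8 n1 n2 n3 n4 hTh lt.
  exists x, v, y, u; split; first by [].
  split; first (by apply/thE; rewrite ea eb ec; move: (dist g x u) => k; clear -k; lia); first (by apply/thE; rewrite ea eb ec; move: (dist g x u) => k; clear -k; lia).
  apply/setP => z; rewrite !inE; apply/negbTE; apply/negP.
  move=> /andP[/orP[]/eqP-> /orP[]/eqP[]] e *; subst;
    by rewrite ?eqxx in nxy nuv nEF.
have [ea [eb ec]] : dist g x u = (dist g x v).+1 /\ dist g y u = dist g x v /\
   dist g y v = (dist g x v).+1
  by clear -a1 a2 a3 a4 a5 a6 a7 a8 n1 n2 n3 n4 hTh ge; lia.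
clear a1 a2 a3 a4 a5 a6 a7 a8 n1 n2 n3 n4 hTh ge.
exists x, u, y, v; split; first by [].
split; first (by apply/thE; rewrite ea eb ec; move: (dist g x v) => k; clear -k; lia); first (by apply/thE; rewrite ea eb ec; move: (dist g x v) => k; clear -k; lia).
apply/setP => z; rewrite !inE; apply/negbTE; apply/negP.
move=> /andP[/orP[]/eqP-> /orP[]/eqP[]] e *; subst;
  by rewrite ?eqxx in nxy nuv nEF.
Qed.
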